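(* Let $R$ be a finite group, let $T$ be a subgroup of $R$, let $p$ be a prime number, and let $\mathrm{Syl}_p(R,T)$ denote the set of Sylow $p$-subgroups $P$ of $R$ such that $T\cap P$ is a Sylow $p$-subgroup of $T$. Then the number of orbits of $T$ acting by conjugation on $\mathrm{Syl}_p(R,T)$ is at most $[R:T]/p^c$, where $p^c$ is the largest power of $p$ dividing $[R:T]$. *)

(* Defs.v *)
From mathcomp Require Import all_boot all_fingroup all_solvable.
Set Implicit Arguments. Unset Strict Implicit. Unset Printing Implicit Defensive.
Import GroupScope.

Definition SylRT (gT : finGroupType) (p : nat) (R T : {set gT}) : {set {group gT}} :=
  [set P in 'Syl_p(R) | p.-Sylow(T) (T :&: P)].

(* Main.v *)
Require Import Defs.
From mathcomp Require Import all_boot all_fingroup all_solvable.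
From mathcomp Require Import zify.
Import GroupScope.

Theorem lemma3p1 (gT : finGroupType) (R T : {group gT}) (p : nat) :
  T \subset R -> prime p ->
  (#|orbit 'JG T @: SylRT p R T| <= #|R : T| %/ p ^ logn p #|R : T|)%N.
Proof.
move=> sTR pr_p.
set S := 'Syl_p(R).
set Ob := orbit 'JG T @: S.
have sub1 : (#|orbit 'JG T @: SylRT p R T| <= #|Ob|)%N.
  apply: subset_leq_card; apply: imsetS; apply/subsetP => P.
  by rewrite inE => /andP[].
apply: leq_trans sub1 _.
have actS : [acts T, on S | 'JG].
  apply: subset_trans sTR _; apply: atrans_acts; exact: Syl_trans.
have part := orbit_partition actS.
have [P0 sylP0] := Sylow_exists p R.
have SP0 : P0 \in S by rewrite inE.
have Spos : (0 < #|S|)%N by apply/card_gt0P; exists P0.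
set k := (#|R| %/ #|S|)%N.
have kN P : P \in S -> #|'N_R(P)| = k.
  rewrite inE => sylP.
  by rewrite /k (card_Syl sylP) -(Lagrange (subsetIl R 'N(P))) mulnK // indexg_gt0.
have kS : (k * #|S|)%N = #|R|.
  by rewrite -(kN P0 SP0) (card_Syl sylP0) Lagrange // subsetIl.
set a := (#|R|`_p * #|T|`_p^')%N.
have aO O : O \in Ob -> (a <= k * #|O|)%N.
  case/imsetP => P SP ->.
  have sylP : p.-Sylow(R) P by move: SP; rewrite inE.
  have sNTR : 'N_T(P) \subset 'N_R(P) by apply: setSI.
  have eO : #|orbit 'JG T P| = #|T : 'N_T(P)|.
    by rewrite card_orbit astab1JG.
  have hT := Lagrange (subsetIl T 'N(P)).
  have hN := Lagrange sNTR.
  have Npos : (0 < #|'N_R(P)|)%N by apply: cardG_gt0.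
  apply: dvdn_leq.
    by rewrite muln_gt0 -(kN P SP) Npos /= eO indexg_gt0.
  rewrite Gauss_dvd; last exact: coprime_partC.
  apply/andP; split.
    apply: dvdn_mulr; rewrite -(kN P SP).
    rewrite -(card_Hall sylP); apply: cardSg.
    by rewrite subsetI (pHall_sub sylP) normG.
  apply: (dvdn_trans (dvdn_part _ #|T|)).
  rewrite -(kN P SP) -hN eO -{1}hT.
  by rewrite mulnAC dvdn_mulr.
have key : (#|Ob| * a <= #|R|)%N.
  rewrite -kS (card_partition part) big_distrr /= -sum_nat_const.
  by apply: leq_sum => O HO; apply: aO.
have Tpos : (0 < #|T|)%N by apply: cardG_gt0.
have ipos : (0 < #|R : T|)%N by apply: indexg_gt0.
rewrite -p_part leq_divRL ?part_gt0 //.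
rewrite -(leq_pmul2l Tpos) (Lagrange sTR).
apply: leq_trans key.
rewrite /a -(Lagrange sTR) partnM //.
rewrite -{1}(partnC p Tpos).
apply: eq_leq; lia.
Qed.
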